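(* Under the standing setup, let $c>0$ be a constant such that $|\mathcal{F}(\mu)(4\pi\overline{\theta^{N}})|>c$ for all $N\in\mathbb{N}$. For $n\ge1$ let \[ U_{n}=\Big\{z\in S\::\:\sup_{r\ge n}|\mathcal{F}(P_{z}\mu)(r)|>c\Big\}. \] Then for every $n\ge1$, $U_n$ is an open and dense subset of $S$.
   Context: Standing setup: Identify $\mathbb{R}^2$ with $\mathbb{C}$. Let $\theta\in\mathbb{C}$ be a complex Pisot number (an algebraic integer with $\theta\notin\mathbb{R}$, $|\theta|>1$, and all Galois conjugates of $\theta$ other than $\overline{\theta}$ of modulus $<1$) such that $\arg\theta\notin\pi\mathbb{Q}$, $3<|\theta|<4$, and the minimal polynomial of $\theta$ over $\mathbb{Q}$ has constant term $1$ or $-1$. Set $\lambda=\theta^{-1}$ and $\mathcal{Y}=\{k\lambda^{l}:k,l\in\mathbb{N}\}$. Let $a_1,a_2\in\mathcal{Y}$ be such that the IFS $\Phi=\{\varphi_{k,j}(z)=\lambda z+(-1)^k a_j : k,j\in\{1,2\}\}$ satisfies the strong separation condition (the images of its attractor under the four maps are pairwise disjoint). Let $\mu$ be the unique compactly supported Borel probability measure on $\mathbb{C}$ with $\mu=\frac14\sum_{k,j\in\{1,2\}}\varphi_{k,j}\mu$ (pushforwards). Write $S=\{z\in\mathbb{C}:|z|=1\}$, $\langle z,w\rangle=\mathrm{Re}(z\overline{w})$, and $P_zw=\langle w,z\rangle$ for $z\in S$, $w\in\mathbb{C}$. For a measure $\nu$ on $\mathbb{C}$, $\mathcal{F}(\nu)(\xi)=\int\exp(i\,\mathrm{Re}(z\overline{\xi}))\,d\nu(z)$;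 for a compactly supported probability measure $\nu$ on $\mathbb{R}$, $\mathcal{F}(\nu)(r)=\int e^{ixr}\,d\nu(x)$. *)

(* Defs.v *)
From HB Require Import structures.
From mathcomp Require Import all_boot all_algebra.
From Stdlib Require Import Reals List ClassicalEpsilon.

Definition intR (z : int) : R :=
  match z with
  | Posz n => INR n
  | Negz n => (- INR (S n))%R
  end.

Definition is_min_poly_int (p : {poly int}) : Prop :=
  (p \is monic) /\ irreducible_poly (map_poly (intr : int -> rat) p).

Definition const_coef_pm1 (p : {poly int}) : Prop :=
  (* constant coefficient is 1 or -1 (Negz 0 = -1) *)
  seq.nth (Posz O) (polyseq p) O = Posz (S O) \/ seq.nth (Posz O) (polyseq p) O = Negz O.

Open Scope R_scope.

Definition Cplx := (R * R)%type.
Definition C0 : Cplx := (0, 0).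
Definition C1 : Cplx := (1, 0).
Definition CRe (z : Cplx) : R := fst z.
Definition CIm (z : Cplx) : R := snd z.
Definition Cadd (z w : Cplx) : Cplx := (fst z + fst w, snd z + snd w).
Definition Csub (z w : Cplx) : Cplx := (fst z - fst w, snd z - snd w).
Definition Cmul (z w : Cplx) : Cplx :=
  (fst z * fst w - snd z * snd w, fst z * snd w + snd z * fst w).
Definition Cscal (r : R) (z : Cplx) : Cplx := (r * fst z, r * snd z).
Definition Cconj (z : Cplx) : Cplx := (fst z, - snd z).
Definition Cmod (z : Cplx) : R := sqrt (fst z * fst z + snd z * snd z).
Definition Cinv (z : Cplx) : Cplx :=
  let d := fst z * fst z + snd z * snd z in (fst z / d, - snd z / d).
Fixpoint Cpow (z : Cplx) (n : nat) : Cplx :=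
  match n with O => C1 | S m => Cmul z (Cpow z m) end.
Definition cis (t : R) : Cplx := (cos t, sin t).
Definition Cinner (z w : Cplx) : R := CRe (Cmul z (Cconj w)).
Definition Cnat (k : nat) : Cplx := (INR k, 0).

Definition Peval (p : {poly int}) (z : Cplx) : Cplx :=
  foldr (fun a acc => Cadd (intR a, 0) (Cmul z acc)) C0 (polyseq p).

Definition complex_pisot_unit (theta : Cplx) : Prop :=
  CIm theta <> 0 /\ Cmod theta > 1 /\
  exists p : {poly int},
    is_min_poly_int p /\ Peval p theta = C0 /\ const_coef_pm1 p /\
    (forall w : Cplx, Peval p w = C0 -> w <> theta -> w <> Cconj theta ->
                   Cmod w < 1).

(* arg theta in pi*Q  (independent of the choice of branch of arg) *)
Definition arg_in_piQ (theta : Cplx) : Prop :=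
  exists (p : Z) (q : nat), (q > 0)%nat /\
    theta = Cscal (Cmod theta) (cis (PI * IZR p / INR q)).

Definition in_Y (lambda a : Cplx) : Prop :=
  exists k l : nat, (k >= 1)%nat /\ (l >= 1)%nat /\
    a = Cmul (Cnat k) (Cpow lambda l).

(* index (k,j) in {1,2}^2 encoded as bool*bool: false <-> 1, true <-> 2 *)
Definition Idx := (bool * bool)%type.
Definition all_idx : list Idx :=
  (false, false) :: (false, true) :: (true, false) :: (true, true) :: nil.
(* phi_{k,j}(z) = lambda z + (-1)^k a_j *)
Definition ifs_trans (a1 a2 : Cplx) (i : Idx) : Cplx :=
  let a := if snd i then a2 else a1 in
  if fst i then a else Cscal (-1) a.
Definition phi (lambda a1 a2 : Cplx) (i : Idx) (z : Cplx) : Cplx :=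
  Cadd (Cmul lambda z) (ifs_trans a1 a2 i).

(* attractor K = image of the coding map:
   x in K iff x = sum_{m>=0} lambda^m t_{d m} for some d : nat -> Idx *)
Fixpoint code_partial (lambda a1 a2 : Cplx) (d : nat -> Idx) (n : nat) : Cplx :=
  match n with
  | O => C0
  | S m => Cadd (code_partial lambda a1 a2 d m)
                (Cmul (Cpow lambda m) (ifs_trans a1 a2 (d m)))
  end.
Definition Cconv (u : nat -> Cplx) (l : Cplx) : Prop :=
  Un_cv (fun n => fst (u n)) (fst l) /\ Un_cv (fun n => snd (u n)) (snd l).
Definition attractor (lambda a1 a2 : Cplx) (x : Cplx) : Prop :=
  exists d : nat -> Idx, Cconv (code_partial lambda a1 a2 d) x.

Definition SSC (lambda a1 a2 : Cplx) : Prop :=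
  forall i j : Idx, i <> j -> forall x y : Cplx,
    attractor lambda a1 a2 x -> attractor lambda a1 a2 y ->
    phi lambda a1 a2 i x <> phi lambda a1 a2 j y.

(* atoms of T^N delta_0, where T nu = 1/4 sum_i phi_i nu (uniform weights);
   mu is the weak limit of T^N delta_0 *)
Fixpoint atoms (lambda a1 a2 : Cplx) (N : nat) : list Cplx :=
  match N with
  | O => C0 :: nil
  | S M => flat_map (fun i => map (phi lambda a1 a2 i) (atoms lambda a1 a2 M))
                    all_idx
  end.

Definition Csum (l : list Cplx) : Cplx := fold_right Cadd C0 l.
(* Fourier transform of the uniform atomic measure on a list *)
Definition avg_list (l : list Cplx) (f : Cplx -> Cplx) : Cplx :=
  Cscal (/ INR (length l)) (Csum (map f l)).

(* limit of a complex sequence (arbitrary value if it does not converge) *)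
Definition Clim (u : nat -> Cplx) : Cplx :=
  epsilon (inhabits C0) (fun l => Cconv u l).

(* F(mu)(xi) = int exp(i Re(z conj xi)) dmu(z) *)
Definition FT_mu (lambda a1 a2 : Cplx) (xi : Cplx) : Cplx :=
  Clim (fun N => avg_list (atoms lambda a1 a2 N)
                          (fun z => cis (Cinner z xi))).

(* F(P_z mu)(r) = int exp(i x r) d(P_z mu)(x), P_z w = <w,z> *)
Definition FT_proj_mu (lambda a1 a2 : Cplx) (z : Cplx) (r : R) : Cplx :=
  Clim (fun N => avg_list (atoms lambda a1 a2 N)
                          (fun w => cis (Cinner w z * r))).

Definition on_S (z : Cplx) : Prop := Cmod z = 1.

Definition U_set (lambda a1 a2 : Cplx) (c : R) (n : nat) (z : Cplx) : Prop :=
  on_S z /\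
  exists s : R,
    is_lub (fun y => exists r : R, r >= INR n /\
                       y = Cmod (FT_proj_mu lambda a1 a2 z r)) s /\
    s > c.

Definition open_in_S (U : Cplx -> Prop) : Prop :=
  (forall z, U z -> on_S z) /\
  forall z, U z -> exists eps, eps > 0 /\
    forall w, on_S w -> Cmod (Csub w z) < eps -> U w.
Definition dense_in_S (U : Cplx -> Prop) : Prop :=
  forall z, on_S z -> forall eps, eps > 0 ->
    exists w, U w /\ Cmod (Csub w z) < eps.

(* Main.v *)
Require Import Defs.
From HB Require Import structures.
From mathcomp Require Import all_boot all_algebra.
From Stdlib Require Import Reals List ClassicalEpsilon.
From Stdlib Require Import Lra Lia Psatz Classical ZArith FunctionalExtensionality.
Open Scope R_scope.

Lemma Cmod_ge0 z : 0 <= Cmod z.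
Proof. unfold Cmod; apply sqrt_pos. Qed.

Lemma Cmod_sq z : Cmod z * Cmod z = fst z * fst z + snd z * snd z.
Proof. unfold Cmod; apply sqrt_sqrt; nra. Qed.

Lemma Cmod_le_of_sq z b : 0 <= b -> fst z * fst z + snd z * snd z <= b * b -> Cmod z <= b.
Proof.
  intros Hb H. unfold Cmod. rewrite <- (sqrt_square b) by exact Hb.
  apply sqrt_le_1_alt; lra.
Qed.

Lemma Cmod_eq_of_sq z b : 0 <= b -> fst z * fst z + snd z * snd z = b * b -> Cmod z = b.
Proof.
  intros Hb H. unfold Cmod. rewrite H. apply sqrt_square; exact Hb.
Qed.

Lemma Cmod_add z w : Cmod (Cadd z w) <= Cmod z + Cmod w.
Proof.
  apply Cmod_le_of_sq. pose proof (Cmod_ge0 z); pose proof (Cmod_ge0 w); lra.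
  destruct z as [x1 x2], w as [y1 y2]; simpl.
  pose proof (Cmod_sq (x1,x2)) as H1; pose proof (Cmod_sq (y1,y2)) as H2; simpl in H1, H2.
  pose proof (Cmod_ge0 (x1,x2)); pose proof (Cmod_ge0 (y1,y2)).
  set (a := Cmod (x1,x2)) in *; set (b := Cmod (y1,y2)) in *.
  assert (x1*y1 + x2*y2 <= a*b).
  { assert ((x1*y1+x2*y2)*(x1*y1+x2*y2) <= (a*b)*(a*b)).
    { replace ((a*b)*(a*b)) with ((a*a)*(b*b)) by ring. rewrite H1 H2. pose proof (Rle_0_sqr (x1*y2-x2*y1)); unfold Rsqr in *; nra. }
    assert (0 <= a*b) by (apply Rmult_le_pos; assumption).
    destruct (Rle_lt_dec (x1*y1+x2*y2) (a*b)); [assumption|nra]. }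
  nra.
Qed.

Lemma Cmod_scal r z : Cmod (Cscal r z) = Rabs r * Cmod z.
Proof.
  apply Cmod_eq_of_sq. apply Rmult_le_pos; [apply Rabs_pos|apply Cmod_ge0].
  destruct z as [x y]; simpl.
  replace (Rabs r * Cmod (x, y) * (Rabs r * Cmod (x, y))) with ((Rabs r * Rabs r) * (Cmod (x,y) * Cmod (x,y))) by ring.
  rewrite Cmod_sq. rewrite <- Rabs_mult. rewrite Rabs_right. simpl; ring. nra.
Qed.

Lemma Cmod_mul z w : Cmod (Cmul z w) = Cmod z * Cmod w.
Proof.
  apply Cmod_eq_of_sq. apply Rmult_le_pos; apply Cmod_ge0.
  replace (Cmod z * Cmod w * (Cmod z * Cmod w)) with ((Cmod z * Cmod z) * (Cmod w * Cmod w)) by ring.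
  rewrite !Cmod_sq. destruct z, w; simpl; ring.
Qed.

Lemma Cmod_fst z : Rabs (fst z) <= Cmod z.
Proof.
  rewrite <- (sqrt_Rsqr_abs (fst z)). unfold Cmod. apply sqrt_le_1_alt.
  unfold Rsqr. nra.
Qed.

Lemma Cmod_snd z : Rabs (snd z) <= Cmod z.
Proof.
  rewrite <- (sqrt_Rsqr_abs (snd z)). unfold Cmod. apply sqrt_le_1_alt.
  unfold Rsqr. nra.
Qed.

Lemma Cmod_le_comp z : Cmod z <= Rabs (fst z) + Rabs (snd z).
Proof.
  apply Cmod_le_of_sq. pose proof (Rabs_pos (fst z)); pose proof (Rabs_pos (snd z)); lra.
  pose proof (Rabs_pos (fst z)); pose proof (Rabs_pos (snd z)).
  assert (fst z * fst z = Rabs (fst z) * Rabs (fst z)) by (rewrite <- Rabs_mult, Rabs_right; nra).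
  assert (snd z * snd z = Rabs (snd z) * Rabs (snd z)) by (rewrite <- Rabs_mult, Rabs_right; nra).
  nra.
Qed.

Lemma Cmod_C0 : Cmod C0 = 0.
Proof. apply Cmod_eq_of_sq; unfold C0; simpl; lra. Qed.

Lemma Cmod_sub_sym z w : Cmod (Csub z w) = Cmod (Csub w z).
Proof. unfold Cmod, Csub; simpl. f_equal; ring. Qed.

Lemma Csub_split z w u : Csub z w = Cadd (Csub z u) (Csub u w).
Proof. unfold Csub, Cadd; simpl; f_equal; ring. Qed.

Lemma Cmod_sub_tri z w u : Cmod (Csub z w) <= Cmod (Csub z u) + Cmod (Csub u w).
Proof. rewrite (Csub_split z w u). apply Cmod_add. Qed.

Lemma Cmod_rev_tri z w : Cmod z - Cmod (Csub z w) <= Cmod w.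
Proof.
  pose proof (Cmod_add w (Csub z w)).
  assert (Cadd w (Csub z w) = z) as E2 by (destruct z, w; unfold Cadd, Csub; simpl; f_equal; ring).
  rewrite E2 in H. lra.
Qed.

Lemma Cmod_cis t : Cmod (cis t) = 1.
Proof. apply Cmod_eq_of_sq. lra. simpl. pose proof (sin2_cos2 t). unfold Rsqr in H. lra. Qed.

Lemma Rabs_sin_le x : Rabs (sin x) <= Rabs x.
Proof.
  assert (forall y, 0 < y -> Rabs (sin y) <= y).
  { intros y Hy. pose proof (sin_lt_x y Hy). apply Rabs_le. split; [|lra].
    destruct (Rle_lt_dec 1 y). pose proof (SIN_bound y); lra.
    assert (0 <= sin y). apply sin_ge_0; pose proof PI2_1; lra. lra. }
  destruct (Rtotal_order x 0) as [Hx|[Hx|Hx]].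
  - replace (sin x) with (- sin (-x)) by (rewrite sin_neg; ring).
    rewrite Rabs_Ropp (Rabs_left x); [apply H; lra|lra].
  - subst; rewrite sin_0; lra.
  - rewrite (Rabs_right x); [apply H; lra|lra].
Qed.

Lemma cis_lip a b : Cmod (Csub (cis a) (cis b)) <= Rabs (a - b).
Proof.
  apply Cmod_le_of_sq. apply Rabs_pos. simpl.
  set (h := (a - b) / 2).
  assert (E : (cos a - cos b) * (cos a - cos b) + (sin a - sin b) * (sin a - sin b)
             = 4 * (sin h * sin h)).
  { assert (Hc : cos (a - b) = 1 - 2 * sin h * sin h).
    { replace (a - b) with (2 * h) by (unfold h; field). apply cos_2a_sin. }
    rewrite cos_minus in Hc.
    pose proof (sin2_cos2 a) as Ha; pose proof (sin2_cos2 b) as Hb; unfold Rsqr in Ha, Hb.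
    nra. }
  rewrite E. pose proof (Rabs_sin_le h).
  assert (Rabs (sin h) * Rabs (sin h) <= Rabs h * Rabs h).
  { apply Rmult_le_compat; auto using Rabs_pos. }
  rewrite <- !Rabs_mult in H0. rewrite !Rabs_right in H0; try nra.
  replace (Rabs (a - b) * Rabs (a - b)) with ((a-b)*(a-b)).
  unfold h in *; nra.
  rewrite <- Rabs_mult; rewrite Rabs_right; [reflexivity|]. pose proof (Rle_0_sqr (a-b)); unfold Rsqr in *; lra.
Qed.

Lemma Cinner_lip1 w w' xi : Rabs (Cinner w xi - Cinner w' xi) <= Cmod (Csub w w') * Cmod xi.
Proof.
  rewrite <- Cmod_mul.
  replace (Cinner w xi - Cinner w' xi) with (fst (Cmul (Csub w w') (Cconj xi))).
  2:{ unfold Cinner, CRe, Cmul, Csub, Cconj; simpl; ring. }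
  eapply Rle_trans. apply Cmod_fst.
  rewrite !Cmod_mul. right; f_equal. unfold Cmod, Cconj; simpl; f_equal; ring.
Qed.

Lemma Cinner_lip2 w xi xi' : Rabs (Cinner w xi - Cinner w xi') <= Cmod w * Cmod (Csub xi xi').
Proof.
  rewrite <- Cmod_mul.
  replace (Cinner w xi - Cinner w xi') with (fst (Cmul w (Cconj (Csub xi xi')))).
  2:{ unfold Cinner, CRe, Cmul, Csub, Cconj; simpl; ring. }
  eapply Rle_trans. apply Cmod_fst.
  rewrite !Cmod_mul. right; f_equal. unfold Cmod, Cconj; simpl; f_equal; ring.
Qed.

Definition avg4 (a b c d : Cplx) : Cplx := Cscal (/4) (Cadd (Cadd a b) (Cadd c d)).

Fixpoint Ef (lam a1 a2 : Cplx) (N : nat) (f : Cplx -> Cplx) : Cplx :=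
  match N with
  | O => f C0
  | S M => avg4 (Ef lam a1 a2 M (fun y => f (phi lam a1 a2 (false,false) y)))
                (Ef lam a1 a2 M (fun y => f (phi lam a1 a2 (false,true) y)))
                (Ef lam a1 a2 M (fun y => f (phi lam a1 a2 (true,false) y)))
                (Ef lam a1 a2 M (fun y => f (phi lam a1 a2 (true,true) y)))
  end.

Lemma Csum_app l1 l2 : Csum (l1 ++ l2) = Cadd (Csum l1) (Csum l2).
Proof.
  induction l1 as [|x l IH]; simpl.
  - destruct (Csum l2); unfold Cadd, C0; simpl; f_equal; ring.
  - rewrite IH. destruct x, (Csum l), (Csum l2); unfold Cadd; simpl; f_equal; ring.
Qed.

Lemma length_atoms lam a1 a2 N : INR (length (atoms lam a1 a2 N)) = 4 ^ N.
Proof.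
  induction N as [|M IH]; simpl. reflexivity.
  rewrite !length_app !length_map. simpl length. rewrite Nat.add_0_r !plus_INR IH. ring.
Qed.

Lemma avg_Ef lam a1 a2 N f : avg_list (atoms lam a1 a2 N) f = Ef lam a1 a2 N f.
Proof.
  revert f; induction N as [|M IH]; intro f.
  - unfold avg_list; simpl. destruct (f C0); unfold Cscal, Cadd, C0; simpl; f_equal; field.
  - set (X := atoms lam a1 a2 M) in *.
    assert (Hpos : INR (length X) <> 0).
    { unfold X; rewrite length_atoms. apply pow_nonzero. lra. }
    assert (Hs : forall g, Csum (map g X) = Cscal (INR (length X)) (Ef lam a1 a2 M g)).
    { intro g. rewrite <- IH. unfold avg_list. destruct (Csum (map g X)); unfold Cscal; simpl.
      f_equal; field; exact Hpos. }
    unfold avg_list. simpl atoms. fold X.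
    simpl flat_map. rewrite !map_app !Csum_app !map_map !Hs.
    rewrite !length_app !length_map. simpl length. rewrite Nat.add_0_r !plus_INR.
    simpl Ef.
    set (e1 := Ef lam a1 a2 M _). set (e2 := Ef lam a1 a2 M _).
    set (e3 := Ef lam a1 a2 M _). set (e4 := Ef lam a1 a2 M _).
    assert (0 < INR (length X)) by (pose proof (pos_INR (length X)); lra).
    destruct e1, e2, e3, e4. unfold avg4, Cscal, Cadd, C0; simpl. f_equal; field; lra.
Qed.

Lemma avg4_diff a b c d a' b' c' d' :
  Cmod (Csub (avg4 a b c d) (avg4 a' b' c' d')) <=
  /4 * (Cmod (Csub a a') + Cmod (Csub b b') + Cmod (Csub c c') + Cmod (Csub d d')).
Proof.
  replace (Csub (avg4 a b c d) (avg4 a' b' c' d')) with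
    (Cscal (/4) (Cadd (Cadd (Csub a a') (Csub b b')) (Cadd (Csub c c') (Csub d d')))).
  2:{ destruct a, b, c, d, a', b', c', d'; unfold avg4, Csub, Cadd, Cscal; simpl; f_equal; ring. }
  rewrite Cmod_scal Rabs_right; [|lra].
  pose proof (Cmod_add (Cadd (Csub a a') (Csub b b')) (Cadd (Csub c c') (Csub d d'))).
  pose proof (Cmod_add (Csub a a') (Csub b b')).
  pose proof (Cmod_add (Csub c c') (Csub d d')). lra.
Qed.

Lemma avg4_const y : avg4 y y y y = y.
Proof. destruct y; unfold avg4, Cscal, Cadd; simpl; f_equal; field. Qed.

Lemma Csub0 z : Csub z C0 = z.
Proof. destruct z; unfold Csub, C0; simpl; f_equal; ring. Qed.

Lemma trans_bound a1 a2 i : Cmod (ifs_trans a1 a2 i) <= Cmod a1 + Cmod a2.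
Proof.
  pose proof (Cmod_ge0 a1); pose proof (Cmod_ge0 a2).
  destruct i as [[|] [|]]; unfold ifs_trans; simpl; try rewrite Cmod_scal; 
    try rewrite Rabs_Ropp Rabs_R1; lra.
Qed.

Lemma phi_sub lam a1 a2 i x y :
  Csub (phi lam a1 a2 i x) (phi lam a1 a2 i y) = Cmul lam (Csub x y).
Proof.
  unfold phi. destruct (ifs_trans a1 a2 i), lam, x, y; unfold Csub, Cadd, Cmul; simpl; f_equal; ring.
Qed.

Lemma phi_bound lam a1 a2 i w :
  Cmod (phi lam a1 a2 i w) <= Cmod lam * Cmod w + (Cmod a1 + Cmod a2).
Proof.
  unfold phi. eapply Rle_trans. apply Cmod_add. rewrite Cmod_mul.
  pose proof (trans_bound a1 a2 i). lra.
Qed.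

Section Bounds.
Variables lam a1 a2 : Cplx.
Variable Rr : R.
Hypothesis HRr0 : 0 <= Rr.
Hypothesis HRr : Cmod lam * Rr + (Cmod a1 + Cmod a2) <= Rr.

Lemma phi_ball i w : Cmod w <= Rr -> Cmod (phi lam a1 a2 i w) <= Rr.
Proof.
  intro H. eapply Rle_trans. apply phi_bound.
  pose proof (Cmod_ge0 lam).
  assert (Cmod lam * Cmod w <= Cmod lam * Rr) by (apply Rmult_le_compat_l; lra). lra.
Qed.

Lemma Ef_diff_ball N : forall f g B,
  (forall w, Cmod w <= Rr -> Cmod (Csub (f w) (g w)) <= B) ->
  Cmod (Csub (Ef lam a1 a2 N f) (Ef lam a1 a2 N g)) <= B.
Proof.
  induction N as [|M IH]; intros f g B H; simpl.
  - apply H. rewrite Cmod_C0; lra.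
  - eapply Rle_trans. apply avg4_diff.
    assert (forall i, Cmod (Csub (Ef lam a1 a2 M (fun y => f (phi lam a1 a2 i y)))
                                  (Ef lam a1 a2 M (fun y => g (phi lam a1 a2 i y)))) <= B).
    { intro i. apply IH. intros w Hw. apply H. apply phi_ball; exact Hw. }
    pose proof (H0 (false,false)); pose proof (H0 (false,true));
    pose proof (H0 (true,false)); pose proof (H0 (true,true)). lra.
Qed.

Lemma Ef_ball N f B :
  (forall w, Cmod w <= Rr -> Cmod (f w) <= B) -> Cmod (Ef lam a1 a2 N f) <= B.
Proof.
  intro H. rewrite <- (Csub0 (Ef lam a1 a2 N f)).
  replace C0 with (Ef lam a1 a2 N (fun _ => C0)).
  - apply Ef_diff_ball. intros w Hw. rewrite Csub0. apply H; exact Hw.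
  - clear H. revert f. induction N as [|M IH]; intro f; simpl. reflexivity.
    rewrite !(IH f). apply avg4_const.
Qed.

End Bounds.

Lemma Ef_step lam a1 a2 N : forall f L, 0 <= L ->
  (forall x y, Cmod (Csub (f x) (f y)) <= L * Cmod (Csub x y)) ->
  Cmod (Csub (Ef lam a1 a2 (S N) f) (Ef lam a1 a2 N f)) <= L * Cmod lam ^ N * (Cmod a1 + Cmod a2).
Proof.
  induction N as [|M IH]; intros f L HL Hf.
  - simpl. rewrite <- (avg4_const (f C0)). eapply Rle_trans. apply avg4_diff.
    assert (forall i, Cmod (Csub (f (phi lam a1 a2 i C0)) (f C0)) <= L * (Cmod a1 + Cmod a2)).
    { intro i. eapply Rle_trans. apply Hf. apply Rmult_le_compat_l; [exact HL|].
      unfold phi. replace (Csub (Cadd (Cmul lam C0) (ifs_trans a1 a2 i)) C0) with (ifs_trans a1 a2 i).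
      apply trans_bound.
      destruct lam, (ifs_trans a1 a2 i); unfold Csub, Cadd, Cmul, C0; simpl; f_equal; ring. }
    pose proof (H (false,false)); pose proof (H (false,true));
    pose proof (H (true,false)); pose proof (H (true,true)). lra.
  - change (Ef lam a1 a2 (S (S M)) f) with
      (avg4 (Ef lam a1 a2 (S M) (fun y => f (phi lam a1 a2 (false,false) y)))
                (Ef lam a1 a2 (S M) (fun y => f (phi lam a1 a2 (false,true) y)))
                (Ef lam a1 a2 (S M) (fun y => f (phi lam a1 a2 (true,false) y)))
                (Ef lam a1 a2 (S M) (fun y => f (phi lam a1 a2 (true,true) y)))).
    change (Ef lam a1 a2 (S M) f) with
      (avg4 (Ef lam a1 a2 M (fun y => f (phi lam a1 a2 (false,false) y)))
                (Ef lam a1 a2 M (fun y => f (phi lam a1 a2 (false,true) y)))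
                (Ef lam a1 a2 M (fun y => f (phi lam a1 a2 (true,false) y)))
                (Ef lam a1 a2 M (fun y => f (phi lam a1 a2 (true,true) y)))).
    eapply Rle_trans. apply avg4_diff.
    assert (forall i, Cmod (Csub (Ef lam a1 a2 (S M) (fun y => f (phi lam a1 a2 i y)))
                                  (Ef lam a1 a2 M (fun y => f (phi lam a1 a2 i y))))
                      <= (L * Cmod lam) * Cmod lam ^ M * (Cmod a1 + Cmod a2)).
    { intro i. apply IH. apply Rmult_le_pos; [exact HL| apply Cmod_ge0].
      intros x y. eapply Rle_trans. apply Hf. rewrite phi_sub Cmod_mul. right; ring. }
    pose proof (H (false,false)); pose proof (H (false,true));
    pose proof (H (true,false)); pose proof (H (true,true)). simpl pow. lra.
Qed.

Lemma geom_bound (u : nat -> Cplx) K q :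
  0 <= K -> 0 <= q < 1 ->
  (forall N, Cmod (Csub (u (S N)) (u N)) <= K * q ^ N) ->
  forall n k, Cmod (Csub (u (Nat.add n k)) (u n)) <= K * q ^ n / (1 - q).
Proof.
  intros HK Hq Hu n k.
  assert (H : Cmod (Csub (u (Nat.add n k)) (u n)) <= K * (q ^ n - q ^ (Nat.add n k)) / (1 - q)).
  { induction k as [|k IH].
    - rewrite Nat.add_0_r. replace (Csub (u n) (u n)) with C0.
      rewrite Cmod_C0. replace (q ^ n - q ^ n) with 0 by ring. unfold Rdiv. rewrite Rmult_0_r Rmult_0_l. lra.
      destruct (u n); unfold Csub, C0; simpl; f_equal; ring.
    - rewrite Nat.add_succ_r. eapply Rle_trans. apply (Cmod_sub_tri _ _ (u (Nat.add n k))).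
      pose proof (Hu (Nat.add n k)).
      replace (K * (q ^ n - q ^ S (Nat.add n k)) / (1 - q)) with
        (K * q ^ (Nat.add n k) + K * (q ^ n - q ^ (Nat.add n k)) / (1 - q)).
      lra. simpl pow. field. lra. }
  eapply Rle_trans. exact H. unfold Rdiv. apply Rmult_le_compat_r.
  apply Rlt_le, Rinv_0_lt_compat; lra.
  apply Rmult_le_compat_l; [exact HK|]. pose proof (pow_le q (Nat.add n k)). lra.
Qed.

Lemma geom_conv (u : nat -> Cplx) K q :
  0 <= K -> 0 <= q < 1 ->
  (forall N, Cmod (Csub (u (S N)) (u N)) <= K * q ^ N) ->
  exists l, Cconv u l.
Proof.
  intros HK Hq Hu.
  assert (Hc : forall eps, 0 < eps -> exists N, forall n m, (n >= N)%coq_nat -> (m >= N)%coq_nat ->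
             Cmod (Csub (u m) (u n)) < eps).
  { intros eps He.
    assert (Hy : 0 < eps * (1 - q) / (2 * (K + 1))).
    { apply Rdiv_lt_0_compat. nra. lra. }
    destruct (pow_lt_1_zero q (ltac:(rewrite Rabs_right; lra)) _ Hy) as [N HN].
    exists N. 
    assert (Hb : forall n k, (n >= N)%coq_nat -> Cmod (Csub (u (Nat.add n k)) (u n)) < eps / 2).
    { intros n k Hn. eapply Rle_lt_trans. apply (geom_bound u K q HK Hq Hu).
      pose proof (HN n Hn) as Hqn. rewrite Rabs_right in Hqn. 2: apply Rle_ge, pow_le; lra.
      apply (Rmult_lt_reg_r (1 - q)). lra. unfold Rdiv. rewrite Rmult_assoc Rinv_l. 2: lra.
      rewrite Rmult_1_r.
      assert (K * q ^ n <= (K + 1) * q ^ n). { pose proof (pow_le q n). nra. }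
      assert ((K + 1) * q ^ n < (K + 1) * (eps * (1 - q) / (2 * (K + 1)))).
      { apply Rmult_lt_compat_l. lra. exact Hqn. }
      replace ((K + 1) * (eps * (1 - q) / (2 * (K + 1)))) with (eps * / 2 * (1 - q)) in H0.
      lra. field. lra. }
    intros n m Hn Hm.
    destruct (Nat.le_ge_cases n m) as [Hnm|Hnm].
    - replace m with (Nat.add n (Nat.sub m n)) by lia. pose proof (Hb n (Nat.sub m n) Hn). lra.
    - rewrite Cmod_sub_sym. replace n with (Nat.add m (Nat.sub n m)) by lia.
      pose proof (Hb m (Nat.sub n m) Hm). lra. }
  assert (C1' : Cauchy_crit (fun n => fst (u n))).
  { intros eps He. destruct (Hc eps He) as [N HN]. exists N. intros n m Hn Hm.
    unfold R_dist. pose proof (HN m n Hm Hn). eapply Rle_lt_trans; [|exact H].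
    replace (fst (u n) - fst (u m)) with (fst (Csub (u n) (u m))) by reflexivity. apply Cmod_fst. }
  assert (C2' : Cauchy_crit (fun n => snd (u n))).
  { intros eps He. destruct (Hc eps He) as [N HN]. exists N. intros n m Hn Hm.
    unfold R_dist. pose proof (HN m n Hm Hn). eapply Rle_lt_trans; [|exact H].
    replace (snd (u n) - snd (u m)) with (snd (Csub (u n) (u m))) by reflexivity. apply Cmod_snd. }
  destruct (R_complete _ C1') as [l1 H1]. destruct (R_complete _ C2') as [l2 H2].
  exists (l1, l2). split; assumption.
Qed.

Lemma Clim_spec u : (exists l, Cconv u l) -> Cconv u (Clim u).
Proof. intro H. unfold Clim. apply epsilon_spec. exact H. Qed.

Lemma lim_diff_le u v l l' B :
  Cconv u l -> Cconv v l' -> (forall N, Cmod (Csub (u N) (v N)) <= B) ->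
  Cmod (Csub l l') <= B.
Proof.
  intros [Hu1 Hu2] [Hv1 Hv2] H.
  destruct (Rle_lt_dec (Cmod (Csub l l')) B) as [|Hlt]; [assumption|exfalso].
  set (e := (Cmod (Csub l l') - B) / 8).
  assert (He : 0 < e) by (unfold e; lra).
  destruct (Hu1 e He) as [N1 HN1]. destruct (Hu2 e He) as [N2 HN2].
  destruct (Hv1 e He) as [N3 HN3]. destruct (Hv2 e He) as [N4 HN4].
  set (N := Nat.max (Nat.max N1 N2) (Nat.max N3 N4)).
  assert (a1 : R_dist (fst (u N)) (fst l) < e) by (apply HN1; unfold N; lia).
  assert (a2 : R_dist (snd (u N)) (snd l) < e) by (apply HN2; unfold N; lia).
  assert (a3 : R_dist (fst (v N)) (fst l') < e) by (apply HN3; unfold N; lia).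
  assert (a4 : R_dist (snd (v N)) (snd l') < e) by (apply HN4; unfold N; lia).
  unfold R_dist in *.
  pose proof (Cmod_sub_tri l l' (u N)). pose proof (Cmod_sub_tri (u N) l' (v N)).
  pose proof (Cmod_le_comp (Csub l (u N))). pose proof (Cmod_le_comp (Csub (v N) l')).
  pose proof (H N). simpl in *.
  rewrite Rabs_minus_sym in a1. rewrite Rabs_minus_sym in a2.
  unfold e in *. lra.
Qed.

Lemma conv_const c : Cconv (fun _ => c) c.
Proof.
  split; intros eps He; exists O; intros; unfold R_dist; rewrite Rminus_diag Rabs_R0; lra.
Qed.

Definition Gs lam a1 a2 xi N := Ef lam a1 a2 N (fun w => cis (Cinner w xi)).
Definition G lam a1 a2 xi := Clim (Gs lam a1 a2 xi).
Definition Rad lam a1 a2 := (Cmod a1 + Cmod a2) / (1 - Cmod lam).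

Section G.
Variables lam a1 a2 : Cplx.
Hypothesis Hq : Cmod lam < 1.

Lemma Rad_ge0 : 0 <= Rad lam a1 a2.
Proof.
  unfold Rad. pose proof (Cmod_ge0 a1); pose proof (Cmod_ge0 a2).
  apply Rmult_le_pos. lra. apply Rlt_le, Rinv_0_lt_compat; lra.
Qed.

Lemma Rad_ok : Cmod lam * Rad lam a1 a2 + (Cmod a1 + Cmod a2) <= Rad lam a1 a2.
Proof. unfold Rad. right. field. lra. Qed.

Lemma Gs_conv xi : Cconv (Gs lam a1 a2 xi) (G lam a1 a2 xi).
Proof.
  apply Clim_spec. apply (geom_conv _ (Cmod xi * (Cmod a1 + Cmod a2)) (Cmod lam)).
  - pose proof (Cmod_ge0 xi); pose proof (Cmod_ge0 a1); pose proof (Cmod_ge0 a2).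
    apply Rmult_le_pos; lra.
  - pose proof (Cmod_ge0 lam); lra.
  - intro N. unfold Gs. eapply Rle_trans. apply (Ef_step _ _ _ _ _ (Cmod xi)). apply Cmod_ge0.
    + intros x y. eapply Rle_trans. apply cis_lip. eapply Rle_trans. apply Cinner_lip1.
      right; ring.
    + right; ring.
Qed.

Lemma G_bound xi : Cmod (G lam a1 a2 xi) <= 1.
Proof.
  rewrite <- (Csub0 (G lam a1 a2 xi)).
  apply (lim_diff_le _ _ _ _ _ (Gs_conv xi) (conv_const C0)).
  intro N. rewrite Csub0. unfold Gs. apply (Ef_ball lam a1 a2 (Rad lam a1 a2) Rad_ge0 Rad_ok).
  intros w _. rewrite Cmod_cis. lra.
Qed.

Lemma G_lip xi xi' : Cmod (Csub (G lam a1 a2 xi) (G lam a1 a2 xi')) <= Rad lam a1 a2 * Cmod (Csub xi xi').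
Proof.
  apply (lim_diff_le _ _ _ _ _ (Gs_conv xi) (Gs_conv xi')).
  intro N. unfold Gs. apply (Ef_diff_ball lam a1 a2 (Rad lam a1 a2) Rad_ge0 Rad_ok).
  intros w Hw. eapply Rle_trans. apply cis_lip. eapply Rle_trans. apply Cinner_lip2.
  apply Rmult_le_compat_r. apply Cmod_ge0. exact Hw.
Qed.

End G.

Lemma FT_mu_G lam a1 a2 xi : FT_mu lam a1 a2 xi = G lam a1 a2 xi.
Proof.
  unfold FT_mu, G, Gs. f_equal. apply functional_extensionality; intro N. apply avg_Ef.
Qed.

Lemma FT_proj_G lam a1 a2 z r : FT_proj_mu lam a1 a2 z r = G lam a1 a2 (Cscal r z).
Proof.
  unfold FT_proj_mu, G, Gs. f_equal. apply functional_extensionality; intro N. rewrite avg_Ef.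
  f_equal. apply functional_extensionality; intro w. f_equal.
  unfold Cinner, CRe, Cmul, Cconj, Cscal; simpl; ring.
Qed.

Lemma NoDup_map_inj (f : nat -> nat) (l : list nat) :
  NoDup l -> (forall x y, In x l -> In y l -> f x = f y -> x = y) -> NoDup (map f l).
Proof.
  induction l as [|a l IH]; intros Hl Hinj; simpl. constructor.
  inversion Hl; subst. constructor.
  - intro Hin. apply in_map_iff in Hin. destruct Hin as [x [Hx Hxl]].
    assert (x = a) by (apply Hinj; simpl; auto). subst. contradiction.
  - apply IH. assumption. intros x y Hx Hy. apply Hinj; simpl; auto.
Qed.

Lemma pigeon (f : nat -> nat) M :
  (forall i, (i <= M)%coq_nat -> (f i < M)%coq_nat) ->
  exists i j, (i < j)%coq_nat /\ (j <= M)%coq_nat /\ f i = f j.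
Proof.
  intro Hf. apply NNPP; intro Hno.
  assert (Hnd : NoDup (map f (seq 0 (S M)))).
  { apply NoDup_map_inj. apply seq_NoDup.
    intros x y Hx Hy Hxy. apply in_seq in Hx; apply in_seq in Hy.
    destruct (Nat.lt_trichotomy x y) as [H|[H|H]]; [|exact H|]; exfalso; apply Hno.
    - exists x, y. split; [exact H|split; [lia|exact Hxy]].
    - exists y, x. split; [exact H|split; [lia|symmetry; exact Hxy]]. }
  assert (Hincl : incl (map f (seq 0 (S M))) (seq 0 M)).
  { intros z Hz. apply in_map_iff in Hz. destruct Hz as [x [Hx Hxl]]. subst.
    apply in_seq in Hxl. apply in_seq. pose proof (Hf x ltac:(lia)). lia. }
  pose proof (NoDup_incl_length Hnd Hincl). rewrite length_map !length_seq in H. lia.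
Qed.

Definition fracp (x : R) := x - IZR (Int_part x).

Lemma fracp_bound x : 0 <= fracp x < 1.
Proof. unfold fracp. pose proof (base_Int_part x). lra. Qed.

Lemma dirichlet (alpha : R) (M : nat) : (1 <= M)%coq_nat ->
  exists (d : nat) (k : Z), (1 <= d)%coq_nat /\ Rabs (INR d * alpha - IZR k) < / INR M.
Proof.
  intro HM.
  assert (HMp : 0 < INR M) by (apply lt_0_INR; lia).
  set (box := fun i : nat => Z.to_nat (Int_part (INR M * fracp (INR i * alpha)))).
  assert (Hbox : forall i, (0 <= Int_part (INR M * fracp (INR i * alpha)))%Z /\
                          (Int_part (INR M * fracp (INR i * alpha)) < Z.of_nat M)%Z).
  { intro i. pose proof (fracp_bound (INR i * alpha)) as Hfr.
    set (y := INR M * fracp (INR i * alpha)).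
    assert (0 <= y < INR M) by (unfold y; split; nra).
    pose proof (base_Int_part y) as [Hb1 Hb2]. split.
    - apply le_IZR. assert (IZR (Int_part y) > -1) by lra.
      assert (-1 < IZR (Int_part y)) by lra. apply lt_IZR in H1. apply IZR_le. lia.
    - apply lt_IZR. rewrite <- INR_IZR_INZ. lra. }
  destruct (pigeon box M) as [i [j [Hij [HjM Heq]]]].
  { intros i _. unfold box. pose proof (Hbox i). lia. }
  exists (Nat.sub j i), (Int_part (INR j * alpha) - Int_part (INR i * alpha))%Z.
  split. lia.
  unfold box in Heq. pose proof (Hbox i) as Hi; pose proof (Hbox j) as Hj.
  assert (Heq' : Int_part (INR M * fracp (INR i * alpha)) = Int_part (INR M * fracp (INR j * alpha))) by lia.
  pose proof (base_Int_part (INR M * fracp (INR i * alpha))) as [B1 B2].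
  pose proof (base_Int_part (INR M * fracp (INR j * alpha))) as [B3 B4].
  rewrite Heq' in B1, B2.
  assert (Hd : Rabs (INR M * fracp (INR j * alpha) - INR M * fracp (INR i * alpha)) < 1).
  { apply Rabs_def1; lra. }
  rewrite minus_INR; [|lia]. rewrite minus_IZR.
  replace (INR M * fracp (INR j * alpha) - INR M * fracp (INR i * alpha)) with
    (INR M * ((INR j - INR i) * alpha - (IZR (Int_part (INR j * alpha)) - IZR (Int_part (INR i * alpha))))) in Hd
    by (unfold fracp; ring).
  rewrite Rabs_mult Rabs_right in Hd; [|lra].
  apply (Rmult_lt_reg_l (INR M)). exact HMp. rewrite Rinv_r; lra.
Qed.

Lemma step_pos (eta beta : R) (N0 : nat) : 0 < eta ->
  exists (j : nat) (m : Z), (N0 <= j)%coq_nat /\ Rabs (INR j * eta - beta - IZR m) <= eta.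
Proof.
  intro He.
  set (m0 := up (INR N0 * eta - beta)).
  pose proof (archimed (INR N0 * eta - beta)) as [A1 A2]. fold m0 in A1, A2.
  set (x := beta + IZR m0).
  set (j0 := up (x / eta)).
  pose proof (archimed (x / eta)) as [A3 A4]. fold j0 in A3, A4.
  assert (Hx : INR N0 < x / eta).
  { apply (Rmult_lt_reg_r eta). exact He. unfold Rdiv. rewrite Rmult_assoc Rinv_l; [|lra].
    unfold x; lra. }
  pose proof (pos_INR N0).
  assert (Hj0 : (0 <= j0)%Z) by (apply le_IZR; lra).
  exists (Z.to_nat j0), m0. rewrite INR_IZR_INZ Z2Nat.id; [|exact Hj0]. split.
  - apply INR_le. rewrite (INR_IZR_INZ (Z.to_nat j0)) Z2Nat.id; [lra|exact Hj0].
  - assert (x < IZR j0 * eta).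
    { apply (Rmult_lt_reg_r (/ eta)). apply Rinv_0_lt_compat; lra.
      rewrite Rmult_assoc Rinv_r; lra. }
    assert (IZR j0 * eta <= x + eta).
    { assert (IZR j0 <= x / eta + 1) by lra.
      apply (Rmult_le_compat_r eta) in H1; [|lra].
      unfold Rdiv in H1. rewrite Rmult_plus_distr_r Rmult_assoc Rinv_l in H1; lra. }
    apply Rabs_le. unfold x in *. lra.
Qed.

Lemma kronecker (alpha beta delta : R) (N0 : nat) :
  (forall d : nat, (1 <= d)%coq_nat -> forall k : Z, INR d * alpha <> IZR k) ->
  0 < delta ->
  exists (N : nat) (k : Z), (N0 <= N)%coq_nat /\ Rabs (INR N * alpha - beta - IZR k) < delta.
Proof.
  intros Hirr Hd.
  set (M := Z.to_nat (up (/ delta))).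
  pose proof (archimed (/ delta)) as [A1 A2].
  assert (Hid : 0 < / delta) by (apply Rinv_0_lt_compat; lra).
  assert (HM : INR M = IZR (up (/ delta))).
  { unfold M. rewrite INR_IZR_INZ Z2Nat.id. reflexivity. apply le_IZR. lra. }
  assert (HM1 : (1 <= M)%coq_nat).
  { apply INR_le. rewrite HM. simpl. assert (0 < IZR (up (/delta))) by lra.
    apply lt_IZR in H. apply IZR_le. lia. }
  destruct (dirichlet alpha M HM1) as [d [k [Hd1 Hdk]]].
  assert (HMd : / INR M < delta).
  { rewrite <- (Rinv_inv delta). apply Rinv_lt_contravar. apply Rmult_lt_0_compat; lra. lra. }
  set (eta := INR d * alpha - IZR k) in *.
  assert (Hne : eta <> 0).
  { unfold eta. intro H. apply (Hirr d Hd1 k). lra. }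
  assert (Hdp : 1 <= INR d) by (replace 1 with (INR 1) by reflexivity; apply le_INR; exact Hd1).
  destruct (Rlt_or_le 0 eta) as [Hp|Hn].
  - destruct (step_pos eta beta N0 Hp) as [j [m [Hj Hjm]]].
    exists (Nat.mul j d), (Z.add (Z.mul (Z.of_nat j) k) m). split. nia.
    rewrite mult_INR plus_IZR mult_IZR -INR_IZR_INZ.
    rewrite Rabs_right in Hdk; [|lra].
    replace (INR j * INR d * alpha - beta - (INR j * IZR k + IZR m)) with (INR j * eta - beta - IZR m)
      by (unfold eta; ring). lra.
  - assert (Hp : 0 < - eta) by (destruct Hn; [lra|contradiction]).
    destruct (step_pos (- eta) (- beta) N0 Hp) as [j [m [Hj Hjm]]].
    exists (Nat.mul j d), (Z.sub (Z.mul (Z.of_nat j) k) m). split. nia.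
    rewrite mult_INR minus_IZR mult_IZR -INR_IZR_INZ.
    rewrite Rabs_left in Hdk; [|lra].
    replace (INR j * INR d * alpha - beta - (INR j * IZR k - IZR m)) with (- (INR j * - eta - - beta - IZR m))
      by (unfold eta; ring). rewrite Rabs_Ropp. lra.
Qed.

Lemma polar x y : x * x + y * y = 1 -> exists t, cos t = x /\ sin t = y.
Proof.
  intro H.
  assert (Hx : -1 <= x <= 1) by (split; nra).
  assert (Hs : sqrt (1 - x²) = Rabs y).
  { rewrite <- sqrt_Rsqr_abs. f_equal. unfold Rsqr. lra. }
  destruct (Rle_or_lt 0 y) as [Hy|Hy].
  - exists (acos x). split. apply cos_acos; exact Hx.
    rewrite sin_acos; [|exact Hx]. rewrite Hs Rabs_right; lra.
  - exists (- acos x). rewrite cos_neg sin_neg. split. apply cos_acos; exact Hx.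
    rewrite sin_acos; [|exact Hx]. rewrite Hs Rabs_left; lra.
Qed.

Lemma Cpow_polar rho t N : Cpow (Cscal rho (cis t)) N = Cscal (rho ^ N) (cis (INR N * t)).
Proof.
  induction N as [|M IH].
  - simpl. unfold Defs.C1, Cscal, cis; simpl. replace (0 * t) with 0 by ring. rewrite cos_0 sin_0. f_equal; ring.
  - simpl Cpow. rewrite IH S_INR. unfold Cmul, Cscal, cis; simpl.
    replace ((INR M + 1) * t) with (INR M * t + t) by ring.
    rewrite cos_plus sin_plus. f_equal; ring.
Qed.

Lemma cis_period_nat x m : cis (x + 2 * INR m * PI) = cis x.
Proof. unfold cis. rewrite cos_period sin_period. reflexivity. Qed.

Lemma cis_periodZ x k : cis (x + 2 * PI * IZR k) = cis x.
Proof.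
  destruct (Z.le_gt_cases 0 k) as [Hk|Hk].
  - rewrite <- (Z2Nat.id k Hk). rewrite <- INR_IZR_INZ.
    replace (x + 2 * PI * INR (Z.to_nat k)) with (x + 2 * INR (Z.to_nat k) * PI) by ring.
    apply cis_period_nat.
  - assert (E : k = (- Z.of_nat (Z.to_nat (- k)))%Z) by lia.
    rewrite E opp_IZR -INR_IZR_INZ.
    set (m := Z.to_nat (-k)).
    rewrite <- (cis_period_nat (x + 2 * PI * - INR m) m). f_equal. ring.
Qed.

Lemma pow_ge_INR rho N : 2 <= rho -> INR N <= rho ^ N.
Proof.
  intro H. induction N as [|M IH]. simpl; lra.
  rewrite S_INR. simpl. pose proof (pow_R1_Rle rho M ltac:(lra)). nra.
Qed.

Lemma lub_exists lam a1 a2 z n : Cmod lam < 1 ->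
  exists s, is_lub (fun y => exists r : R, r >= INR n /\ y = Cmod (FT_proj_mu lam a1 a2 z r)) s.
Proof.
  intro Hq. destruct (completeness (fun y => exists r : R, r >= INR n /\ y = Cmod (FT_proj_mu lam a1 a2 z r))) as [s Hs].
  - exists 1. intros y [r [_ ->]]. rewrite FT_proj_G. apply G_bound; exact Hq.
  - exists (Cmod (FT_proj_mu lam a1 a2 z (INR n))). exists (INR n). split; [lra|reflexivity].
  - exists s; exact Hs.
Qed.

Lemma Cmod_inv_lt theta : 1 < Cmod theta -> Cmod (Cinv theta) < 1.
Proof.
  intro H.
  assert (Hd : fst theta * fst theta + snd theta * snd theta <> 0).
  { rewrite <- Cmod_sq. nra. }
  assert (E : Cmul (Cinv theta) theta = Defs.C1).
  { destruct theta as [x y]; unfold Cmul, Cinv, Defs.C1; simpl in *. f_equal; field; exact Hd. }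
  assert (Cmod (Cinv theta) * Cmod theta = 1).
  { rewrite <- Cmod_mul, E. apply Cmod_eq_of_sq; unfold Defs.C1; simpl; lra. }
  pose proof (Cmod_ge0 (Cinv theta)). nra.
Qed.

Theorem lemma3p3 (theta a1 a2 : Cplx) (c : R) :
  complex_pisot_unit theta ->
  ~ arg_in_piQ theta ->
  3 < Cmod theta < 4 ->
  in_Y (Cinv theta) a1 -> in_Y (Cinv theta) a2 ->
  SSC (Cinv theta) a1 a2 ->
  c > 0 ->
  (forall N : nat, (N >= 1)%nat ->
     Cmod (FT_mu (Cinv theta) a1 a2
             (Cscal (4 * PI) (Cconj (Cpow theta N)))) > c) ->
  forall n : nat, (n >= 1)%nat ->
    open_in_S (U_set (Cinv theta) a1 a2 c n) /\
    dense_in_S (U_set (Cinv theta) a1 a2 c n).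
Proof.
  intros _ Hnarg Hmod _ _ _ Hc HFT n Hn.
  move/leP: Hn => Hn.
  assert (Hq : Cmod (Cinv theta) < 1) by (apply Cmod_inv_lt; lra).
  set (lam := Cinv theta) in *.
  assert (Hn1 : 1 <= INR n) by (replace 1 with (INR 1) by reflexivity; apply le_INR; exact Hn).
  pose proof (Rad_ge0 lam a1 a2 Hq) as HR0.
  split.
  -
    split. { intros z [Hz _]; exact Hz. }
    intros z [Hz [s [Hlub Hsc]]].
    destruct (classic (exists r, r >= INR n /\ Cmod (FT_proj_mu lam a1 a2 z r) > c)) as [[r [Hr Hrc]]|Hno].
    2:{ exfalso. assert (s <= c).
        { apply (proj2 Hlub). intros y [r [Hr ->]].
          destruct (Rle_lt_dec (Cmod (FT_proj_mu lam a1 a2 z r)) c) as [|Hlt]; [assumption|].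
          exfalso; apply Hno; exists r; split; [exact Hr|exact Hlt]. }
        lra. }
    set (v := Cmod (FT_proj_mu lam a1 a2 z r) - c).
    assert (Hv : 0 < v) by (unfold v; lra).
    set (K := Rad lam a1 a2 * r + 1).
    assert (HK : 1 <= K) by (unfold K; pose proof (Rmult_le_pos _ _ HR0 (ltac:(lra) : 0 <= r)); lra).
    exists (v / K). split. { apply Rdiv_lt_0_compat; lra. }
    intros w Hw Hwz. split. exact Hw.
    destruct (lub_exists lam a1 a2 w n Hq) as [s' Hs'].
    exists s'. split. exact Hs'.
    assert (Hin : Cmod (FT_proj_mu lam a1 a2 w r) <= s').
    { apply (proj1 Hs'). exists r. split; [exact Hr|reflexivity]. }
    assert (Hdiff : Cmod (Csub (FT_proj_mu lam a1 a2 z r) (FT_proj_mu lam a1 a2 w r)) < v).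
    { rewrite !FT_proj_G. eapply Rle_lt_trans. apply (G_lip lam a1 a2 Hq).
      replace (Csub (Cscal r z) (Cscal r w)) with (Cscal r (Csub z w))
        by (destruct z, w; unfold Csub, Cscal; simpl; f_equal; ring).
      rewrite Cmod_scal Rabs_right; [|lra]. rewrite Cmod_sub_sym.
      assert (Cmod (Csub w z) * K < v).
      { apply (Rmult_lt_reg_r (/ K)). apply Rinv_0_lt_compat; lra.
        rewrite Rmult_assoc Rinv_r; [|lra]. rewrite Rmult_1_r. exact Hwz. }
      pose proof (Cmod_ge0 (Csub w z)).
      unfold K in H. nra. }
    pose proof (Cmod_rev_tri (FT_proj_mu lam a1 a2 z r) (FT_proj_mu lam a1 a2 w r)).
    unfold v in Hdiff. lra.
  -
    intros z Hz eps Heps.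
    remember (Cmod theta) as rho eqn:Hrho.
    assert (Hrho0 : 0 < rho) by lra.
    destruct (polar (fst theta / rho) (snd theta / rho)) as [t [Ht1 Ht2]].
    { replace (fst theta / rho * (fst theta / rho) + snd theta / rho * (snd theta / rho))
        with ((fst theta * fst theta + snd theta * snd theta) / (rho * rho)) by (field; lra).
      rewrite <- Cmod_sq, <- Hrho. field; lra. }
    assert (Hth : theta = Cscal rho (cis t)).
    { destruct theta as [x y]. unfold Cscal, cis. rewrite Ht1 Ht2. simpl. f_equal; field; lra. }
    destruct (polar (fst z) (snd z)) as [s [Hs1 Hs2]].
    { rewrite <- Cmod_sq. unfold on_S in Hz. rewrite Hz. ring. }
    assert (Hzs : z = cis s) by (destruct z; unfold cis; rewrite Hs1 Hs2; reflexivity).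
    assert (HPI : 0 < PI) by exact PI_RGT_0.
    assert (Hirr : forall d : nat, (1 <= d)%coq_nat -> forall k : Z, INR d * (- t / (2 * PI)) <> IZR k).
    { intros d Hd k Hdk. apply Hnarg. exists (- 2 * k)%Z, d. split.
      - apply/ltP. lia.
      - rewrite <- Hrho. rewrite {1}Hth. f_equal. f_equal.
        assert (Hdp : 0 < INR d) by (apply lt_0_INR; lia).
        rewrite mult_IZR. replace (IZR (-2)) with (-2) by reflexivity.
        rewrite <- Hdk. field. split; lra. }
    destruct (kronecker (- t / (2 * PI)) (s / (2 * PI)) (eps / (2 * PI)) n Hirr
                ltac:(apply Rdiv_lt_0_compat; lra)) as [N [k [HN Hk]]].
    exists (cis (- (INR N * t))). split.
    + split. apply Cmod_cis.
      destruct (lub_exists lam a1 a2 (cis (- (INR N * t))) n Hq) as [s' Hs'].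
      exists s'. split. exact Hs'.
      set (r := 4 * PI * rho ^ N).
      assert (Hr : r >= INR n).
      { assert (INR n <= INR N) by (apply le_INR; exact HN).
        pose proof (pow_ge_INR rho N ltac:(lra)).
        pose proof (pow_R1_Rle rho N ltac:(lra)).
        pose proof PI2_1. unfold r. nra. }
      assert (Hin : Cmod (FT_proj_mu lam a1 a2 (cis (- (INR N * t))) r) <= s').
      { apply (proj1 Hs'). exists r. split; [exact Hr|reflexivity]. }
      assert (HNge : (N >= 1)%nat) by (apply/leP; lia).
      pose proof (HFT N HNge) as HF.
      rewrite FT_mu_G in HF. rewrite FT_proj_G in Hin.
      replace (Cscal r (cis (- (INR N * t)))) with (Cscal (4 * PI) (Cconj (Cpow theta N))) in Hin.
      lra.
      rewrite Hth Cpow_polar. unfold r, Cscal, Cconj, cis; simpl. rewrite cos_neg sin_neg.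
      f_equal; ring.
    + rewrite Hzs. rewrite <- (cis_periodZ s k).
      eapply Rle_lt_trans. apply cis_lip.
      replace (- (INR N * t) - (s + 2 * PI * IZR k)) with
        (2 * PI * (INR N * (- t / (2 * PI)) - s / (2 * PI) - IZR k)) by (field; lra).
      rewrite Rabs_mult Rabs_right; [|lra].
      apply (Rmult_lt_reg_l (/ (2 * PI))). apply Rinv_0_lt_compat; lra.
      rewrite <- Rmult_assoc, Rinv_l; [|lra]. rewrite Rmult_1_l.
      replace (/ (2 * PI) * eps) with (eps / (2 * PI)) by (field; lra). exact Hk.
Qed.
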